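(* Let $S\subseteq V$ and $u\in V\setminus S$, and write $\Delta(S,u)=r(S\cup\{u\})-r(S)$. If $S\cap A_u=\emptyset$, then $$\Delta(S,u)=\Big(n_u-\Big|\bigcup_{j\in N_u\cap S}N_j\Big|\Big)\mathbb{P}\{Z_u>\tau\}.$$ If $S\cap A_u\neq\emptyset$, let $v$ be the element of $S\cap A_u$ of maximal depth (the closest ancestor of $u$ in $S$); then $$\Delta(S,u)=\Big(n_u-\Big|\bigcup_{j\in N_u\cap S}N_j\Big|\Big)\Big(\mathbb{P}\{Z_u>\tau\}-\mathbb{P}\{Z_v>\tau\}\Big).$$ In both cases $\Delta(S,u)\ge 0$.
   Context: Let $G=(V,E)$ be a finite tree with $|V|=n$, rooted at a node $s$ (the infection source). For a node $i$: $d_i$ is its depth (number of edges on the path from $s$ to $i$); $A_i$ is the set of ancestors of $i$ (strict, including its parent); $N_i$ is the set of descendants of $i$ (strict, not including $i$); $n_i=|N_i|$. Each edge $e$ carries an independent random variable $X_e\sim\mathrm{Exp}(\lambda)$ with $\lambda>0$, and $Z_i=\sum_{e \text{ on the path from } s \text{ to } i}X_e$ is the infection time of $i$ (so $Z_s=0$; $Z_i$ is a sum of $d_i$ i.i.d. $\mathrm{Exp}(\lambda)$ variables). The immunization time $\tau\ge 0$ is a single random variable, common to all vaccinated nodes and independent of $(X_e)_{e\in E}$. For $S\subseteq V$ (the vaccinated set), a node $i\in S$ becomes immune iff $Z_i>\tau$, and an immune node saves all its descendants. The expected total reward is defined as $r(S)=\mathbb{E}\big[\,\big|\bigcup_{i\in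 S:\,Z_i>\tau}N_i\big|\,\big]$, the expected number of nodes that are descendants of at least one immune vaccinated node. *)

(* Defs.v *)
From HB Require Import structures.
From mathcomp Require Import all_boot all_order all_algebra.
From mathcomp Require Import all_classical all_reals all_analysis.
Set Implicit Arguments. Unset Strict Implicit. Unset Printing Implicit Defensive.
Import Order.TTheory GRing.Theory Num.Theory.
Local Open Scope classical_set_scope.
Local Open Scope ring_scope.

(* A finite rooted tree on the finite vertex type V is given by a parent map
   [par] with [par s = s] (s the root) and every vertex reaching s by iterating
   [par].  Edges are the pairs (par i, i) for i != s, hence are indexed by the
   non-root vertices: the type [edge s]. *)
Definition is_rooted_tree (V : finType) (s : V) (par : V -> V) : Prop :=
  par s = s /\ forall i : V, fconnect par i s.

Definition edge (V : finType) (s : V) := {i : V | i != s}.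

Definition anc (V : finType) (par : V -> V) (i : V) : {set V} :=
  [set j | (j != i) && fconnect par i j].

Definition desc (V : finType) (par : V -> V) (i : V) : {set V} :=
  [set j | i \in anc par j].

(* d_i: depth = number of edges from s to i = number of strict ancestors. *)
Definition depth (V : finType) (par : V -> V) (i : V) : nat := #|anc par i|.

(* Z_i: infection time, sum of X_e over the edges e on the path from s to i;
   the edge (par j, j) lies on that path iff j \in i |: A_i. *)
Definition infection_time (V : finType) (s : V) (par : V -> V) (Omega : Type)
  (R : realType) (X : edge s -> Omega -> R) (i : V) (w : Omega) : R :=
  \sum_(e : edge s | val e \in i |: anc par i) X e w.

Definition mutually_independent (d : measure_display) (T : measurableType d)
  (R : realType) (P : probability T R) (I : finType) (Y : I -> T -> R) : Prop :=
  forall B : I -> set R, (forall k, measurable (B k)) ->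
  P (\bigcap_(k in [set: I]) (Y k @^-1` B k)) = (\prod_(k : I) P (Y k @^-1` B k))%E.

Definition edges_and_tau (V : finType) (s : V) (Omega : Type) (R : realType)
  (X : edge s -> Omega -> R) (tau : Omega -> R) : option (edge s) -> Omega -> R :=
  fun k => match k with Some e => X e | None => tau end.

(* Nodes saved at outcome w: descendants of some immune vaccinated node. *)
Definition saved (V : finType) (s : V) (par : V -> V) (Omega : Type)
  (R : realType) (X : edge s -> Omega -> R) (tau : Omega -> R)
  (S : {set V}) (w : Omega) : {set V} :=
  (\bigcup_(i in S | tau w < infection_time par X i w) desc par i)%SET.

Definition reward (V : finType) (s : V) (par : V -> V) (d : measure_display)
  (T : measurableType d) (R : realType) (P : probability T R)
  (X : edge s -> T -> R) (tau : T -> R) (S : {set V}) : \bar R :=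
  'E_P[fun w => (#|saved par X tau S w|)%:R].

(* Main.v *)
Require Import Defs.
From HB Require Import structures.
From mathcomp Require Import all_boot all_order all_algebra.
From mathcomp Require Import all_classical all_reals all_analysis.
From mathcomp Require Import measurable_realfun.
Import Order.TTheory GRing.Theory Num.Theory.
Local Open Scope classical_set_scope.
Local Open Scope ring_scope.

Lemma iter_mulk (T : Type) (f : T -> T) a k j : iter k f a = a -> iter (j * k) f a = a.
Proof. move=> h; elim: j => [|j IH] //=; by rewrite mulSn iterD IH h. Qed.

Lemma reach_total (V : finType) (par : V -> V) x a b :
  fconnect par x a -> fconnect par x b -> fconnect par a b \/ fconnect par b a.
Proof.
move=> /iter_findex ha /iter_findex hb.
set m := findex par x a in ha; set n := findex par x b in hb.
case: (leqP m n) => hmn.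
  left; rewrite -hb -ha -(subnK hmn) iterD; exact: fconnect_iter.
right; rewrite -hb -ha -(subnK (ltnW hmn)) iterD; exact: fconnect_iter.
Qed.

Lemma reach_antisym (V : finType) (s : V) (par : V -> V) a b :
  is_rooted_tree s par -> fconnect par a b -> fconnect par b a -> a = b.
Proof.
move=> [ps hs] /iter_findex hab /iter_findex hba.
set m := findex par a b in hab; set n := findex par b a in hba.
have hk : iter (n + m) par a = a by rewrite iterD hab hba.
case: (posnP (n + m)) => hnm.
  by move/eqP: hnm; rewrite addn_eq0 => /andP[_ /eqP m0]; rewrite -hab m0.
have hst := iter_findex (hs a); set t := findex par a s in hst.
have hmul := @iter_mulk _ _ _ _ t hk.
have aS : a = s.
  rewrite -hmul -(subnK (leq_pmulr t hnm)) iterD hst; exact: iter_fix.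
by rewrite -hab aS iter_fix.
Qed.

Arguments reach_antisym {V s par a b}.
Arguments reach_total {V par x a b}.
Lemma in_desc (V : finType) (par : V -> V) i x :
  (x \in desc par i) = (i != x) && fconnect par x i.
Proof. by rewrite /desc /anc !inE. Qed.

Lemma desc_trans (V : finType) (s : V) (par : V -> V) u j :
  is_rooted_tree s par -> j \in desc par u -> {subset desc par j <= desc par u}.
Proof.
move=> tr; rewrite !in_desc => /andP[uj rju] x; rewrite !in_desc => /andP[jx rxj].
have rxu := connect_trans rxj rju.
rewrite rxu andbT; apply/negP => /eqP ux; rewrite -ux in rxj.
by rewrite (reach_antisym tr rxj rju) eqxx in uj.
Qed.

Lemma desc_tri (V : finType) (par : V -> V) i u x :
  i != u -> x \in desc par i -> x \in desc par u ->
  i \in desc par u \/ u \in desc par i.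
Proof.
rewrite !in_desc => iu /andP[_ hi] /andP[_ hu].
case: (reach_total hi hu) => h; [left|right]; rewrite h andbT //.
by rewrite eq_sym.
Qed.

Lemma edges_mono (V : finType) (par : V -> V) x y (e : V) :
  fconnect par x y -> e \in y |: anc par y -> e \in x |: anc par x.
Proof.
rewrite !inE => rxy /orP[/eqP -> | /andP[ey rye]].
  by rewrite rxy andbT orbN.
by rewrite (connect_trans rxy rye) andbT orbN.
Qed.

Lemma depth_lt (V : finType) (s : V) (par : V -> V) v i :
  is_rooted_tree s par -> i \in desc par v -> (depth par v < depth par i)%N.
Proof.
move=> tr vi; rewrite /depth; apply: (@proper_card _ (anc par v) (anc par i)); apply/properP; split.
  apply/fintype.subsetP => y; rewrite /anc !inE => /andP[yv rvy].
  move: vi; rewrite in_desc => /andP[vi riv].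
  rewrite (connect_trans riv rvy) andbT; apply/negP => /eqP yi; rewrite yi in rvy yv.
  by rewrite (reach_antisym tr riv rvy) eqxx in yv.
exists v; first by move: vi; rewrite in_desc /anc inE eq_sym.
by rewrite /anc inE eqxx.
Qed.
Arguments desc_trans {V s par u j}.
Arguments desc_tri {V par i u x}.
Arguments edges_mono {V par x y e}.
Arguments depth_lt {V s par v i}.
Arguments in_desc {V par i x}.

Lemma cardUD (T : finType) (A B : {set T}) : #|A :|: B| = (#|B| + #|A :\: B|)%N.
Proof.
rewrite -(cardsID B (A :|: B)). congr (_ + _)%N.
  by rewrite finset.setIC finset.setKU.
by rewrite finset.setDUl finset.setDv finset.setU0.
Qed.

Definition savedb (V : finType) (par : V -> V) (b : V -> bool) (S : {set V}) : {set V} :=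
  (\bigcup_(i in S | b i) desc par i)%SET.

Arguments savedb {V}.

Lemma savedb_U1 (V : finType) (par : V -> V) (b : V -> bool) (S : {set V}) (u : V) :
  savedb par b (u |: S) = if b u then desc par u :|: savedb par b S else savedb par b S.
Proof.
apply/setP => x; rewrite /savedb; case: ifP => hu.
- rewrite finset.in_setU; apply/bigcupP/orP.
  + move=> [i /andP[]]; rewrite finset.in_setU1 => /orP[/eqP-> _ xu|iS hi xi]; first by left.
    by right; apply/bigcupP; exists i => //; rewrite iS hi.
  + case=> [xu|/bigcupP[i /andP[iS hi] xi]]; first by exists u => //; rewrite finset.in_setU1 eqxx hu.
    by exists i => //; rewrite finset.in_setU1 iS orbT hi.
- apply/bigcupP/bigcupP.
  + move=> [i /andP[]]; rewrite finset.in_setU1 => /orP[/eqP-> hu'|iS hi xi]; first by rewrite hu' in hu.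
    by exists i => //; rewrite iS hi.
  + by move=> [i /andP[iS hi] xi]; exists i => //; rewrite finset.in_setU1 iS orbT hi.
Qed.

Lemma card_savedb_U1 (V : finType) (par : V -> V) (b : V -> bool) (S : {set V}) (u : V) :
  #|savedb par b (u |: S)| = (#|savedb par b S| + #|desc par u :\: savedb par b S| * b u)%N.
Proof. by rewrite savedb_U1; case: (b u); rewrite ?cardUD ?muln1 ?muln0 ?addn0. Qed.

Lemma diff_anc (V : finType) (s : V) (par : V -> V) (b : V -> bool) (S : {set V}) (u : V) i :
  is_rooted_tree s par -> i \in S -> u \in desc par i -> b i ->
  desc par u :\: savedb par b S = finset.set0.
Proof.
move=> tr iS ui bi; apply/setP => x; rewrite !inE; apply/negP => /andP[].
move=> /negP nx xu; apply: nx; apply/bigcupP; exists i; first by rewrite iS bi.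
by apply: (desc_trans tr ui); rewrite in_desc.
Qed.

Lemma diff_noanc (V : finType) (s : V) (par : V -> V) (b : V -> bool) (S : {set V}) (u : V) :
  is_rooted_tree s par ->
  (forall x y, fconnect par x y -> b y -> b x) ->
  u \notin S -> b u -> (forall i, i \in S -> u \in desc par i -> ~~ b i) ->
  #|desc par u :\: savedb par b S| =
    (#|desc par u| - #|(\bigcup_(j in desc par u :&: S) desc par j)%SET|)%N.
Proof.
move=> tr hb uS bu hanc.
set U := (\bigcup_(j in desc par u :&: S) desc par j)%SET.
have sU : U \subset desc par u.
  apply/bigcupsP => j; rewrite inE => /andP[ju _].
  apply/fintype.subsetP; exact: (desc_trans tr ju).
have -> : desc par u :\: savedb par b S = desc par u :\: U.
  apply/setP => x; rewrite !finset.in_setD; case xu: (x \in desc par u); rewrite ?andbF //.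
  rewrite !andbT; congr negb; apply/bigcupP/bigcupP.
  - move=> [i /andP[iS bi] xi].
    have iu : i != u by apply: contraNneq uS => <-.
    case: (desc_tri iu xi xu) => h.
      by exists i => //; rewrite inE h iS.
    by move: (hanc i iS h); rewrite bi.
  - move=> [j]; rewrite inE => /andP[ju jS] xj; exists j => //.
    rewrite jS /=; apply: (hb _ u) => //.
    by move: ju; rewrite in_desc => /andP[_].
by rewrite cardsD (finset.setIidPr sU).
Qed.

Lemma meas_Z (R : realType) (V : finType) (s : V) (par : V -> V)
  (d : measure_display) (Omega : measurableType d)
  (P : probability Omega R) (X : edge s -> {RV P >-> R}) (i : V) :
  measurable_fun setT (infection_time par (fun e => X e : Omega -> R) i).
Proof.
rewrite /infection_time.
have -> : (fun w => \sum_(e : edge s | val e \in i |: anc par i) X e w) =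
  (fun w => \sum_(e <- index_enum (edge s)) (if val e \in i |: anc par i then X e w else 0)).
  by apply/funext => w; rewrite big_mkcond.
apply: measurable_sum => e; case: (val e \in i |: anc par i); [exact: (measurable_funP (X e)) | exact: measurable_cst].
Qed.

Arguments meas_Z {R V s par d Omega P} X i.

Lemma meas_immune (R : realType) (V : finType) (s : V) (par : V -> V)
  (d : measure_display) (Omega : measurableType d)
  (P : probability Omega R) (X : edge s -> {RV P >-> R}) (tau : {RV P >-> R}) (i : V) :
  measurable [set w | tau w < infection_time par (fun e => X e : Omega -> R) i w].
Proof.
rewrite (_ : [set w | _] = setT `&` ((fun x => tau x < infection_time par (fun e => X e : Omega -> R) i x) @^-1` [set true])).
  exact: (measurable_fun_ltr (measurable_funP tau) (meas_Z X i) measurableT (Y := [set true]) ltac:(by [])).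
by apply/seteqP; split => w /=; [move=> h; split | case].
Qed.

Arguments meas_immune {R V s par d Omega P} X tau i.

Lemma meas_f (R : realType) (V : finType) (s : V) (par : V -> V)
  (d : measure_display) (Omega : measurableType d)
  (P : probability Omega R) (X : edge s -> {RV P >-> R}) (tau : {RV P >-> R}) (S : {set V}) :
  measurable_fun setT (fun w => (#|saved par (fun e => X e : Omega -> R) tau S w|)%:R : R).
Proof.
pose E x := \bigcup_(i in [set i | (i \in S) && (x \in desc par i)])
   [set w | tau w < infection_time par (fun e => X e : Omega -> R) i w].
have -> : (fun w => (#|saved par (fun e => X e : Omega -> R) tau S w|)%:R : R) =
   (fun w => \sum_(x <- index_enum V) (\1_(E x) w : R)).
  apply/funext => w; rewrite -sum1_card natr_sum big_mkcond /=.
  apply: eq_bigr => x _; rewrite indicE.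
  have -> : (x \in saved par (fun e => X e : Omega -> R) tau S w) = (w \in E x).
    apply/idP/idP.
    - by move=> /bigcupP [i /andP[iS bi] xi]; apply/mem_set; exists i => //=; rewrite iS xi.
    - move=> /set_mem [i /= /andP[iS xi] bi]; apply/bigcupP; exists i => //; rewrite iS bi.
  by case: (w \in E x).
  by case: (w \in E x).
apply: (@measurable_sum _ _ _ _ _ (index_enum V) (fun x w => (\1_(E x) w : R))) => x.
apply: measurable_indic; apply: fin_bigcup_measurable.
  exact: finite_finset.
move=> i _; exact: meas_immune.
Qed.

Lemma ae_nonneg (R : realType) (V : finType) (s : V)
  (d : measure_display) (Omega : measurableType d)
  (P : probability Omega R) (X : edge s -> {RV P >-> R}) (lam : R) :
  (forall (e : edge s) (A : set R), measurable A ->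
     P (X e @^-1` A) = exponential_prob lam A) ->
  {ae P, forall w, forall e, 0 <= X e w}.
Proof.
move=> hX; apply: filter_forall => e.
exists (X e @^-1` `]-oo, 0[); split.
- apply: measurable_funPTI; exact: measurable_itv.
- rewrite hX; last exact: measurable_itv.
  rewrite /exponential_prob integral0_eq // => x; rewrite /= in_itv /= => x0.
  by rewrite lt0_exponential_pdf.
- move=> w /= h; rewrite in_itv /= ltNge; apply/negP => h'; exact: h.
Qed.

Lemma Z_mono (R : realType) (V : finType) (s : V) (par : V -> V) (Omega : Type)
  (X : edge s -> Omega -> R) (w : Omega) (x y : V) :
  (forall e, 0 <= X e w) -> fconnect par x y ->
  infection_time par X y w <= infection_time par X x w.
Proof.
move=> X0 rxy; rewrite /infection_time [X in X <= _]big_mkcond [X in _ <= X]big_mkcond /=.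
apply: ler_sum => e _; case: ifP => hy; first by rewrite (edges_mono rxy hy).
by case: ifP.
Qed.

Arguments meas_f {R V s par d Omega P} X tau S.
Arguments ae_nonneg {R V s d Omega P} X lam.
Arguments Z_mono {R V s par Omega X w x y}.
Arguments diff_noanc {V s par b S u}.
Arguments diff_anc {V s par b S u i}.

Lemma savedE (R : realType) (V : finType) (s : V) (par : V -> V) (Omega : Type)
  (X : edge s -> Omega -> R) tau (S : {set V}) w :
  saved par X tau S w = savedb par (fun i => tau w < infection_time par X i w) S.
Proof. by []. Qed.

Theorem mainTheorem3 (R : realType) (V : finType) (s : V) (par : V -> V)
  (lam : R) (d : measure_display) (Omega : measurableType d)
  (P : probability Omega R) (X : edge s -> {RV P >-> R}) (tau : {RV P >-> R}) :
  is_rooted_tree s par -> 0 < lam ->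
  (forall (e : edge s) (A : set R), measurable A ->
     P (X e @^-1` A) = exponential_prob lam A) ->
  (forall w, 0 <= tau w) ->
  mutually_independent P (edges_and_tau (fun e => X e : Omega -> R) tau) ->
  forall (S : {set V}) (u : V), u \notin S ->
  let r := reward par P (fun e => X e : Omega -> R) tau in
  let Z := infection_time par (fun e => X e : Omega -> R) in
  let Delta := (r (u |: S) - r S)%E in
  let c := (#|desc par u|%:R - #|(\bigcup_(j in desc par u :&: S) desc par j)%SET|%:R : R) in
  [/\ S :&: anc par u = finset.set0 ->
        Delta = (c%:E * P [set w | (tau w < Z u w)%R])%E,
      forall v : V, v \in S :&: anc par u ->
        (forall v' : V, v' \in S :&: anc par u -> (depth par v' <= depth par v)%N) ->
        Delta = (c%:E * (P [set w | (tau w < Z u w)%R] - P [set w | (tau w < Z v w)%R]))%E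
    & (0 <= Delta)%E].
Proof.
move=> tr lam0 hX tau0 _ S u uS r Z Delta c.
pose f (T : {set V}) w := (#|saved par (fun e => X e : Omega -> R) tau T w|)%:R : R.
have rE T : r T = (\int[P]_w (f T w)%:E)%E by rewrite /r /reward unlock.
pose U := (\bigcup_(j in desc par u :&: S) desc par j)%SET.
pose c' := (#|desc par u| - #|U|)%N.
have sU : U \subset desc par u.
  apply/bigcupsP => j; rewrite inE => /andP[ju _].
  apply/fintype.subsetP; exact: (desc_trans tr ju).
have cE : c = c'%:R by rewrite /c /c' natrB // subset_leq_card.
pose g w := ((#|desc par u :\: saved par (fun e => X e : Omega -> R) tau S w| * (tau w < Z u w)%R)%N%:R : R).
have fg w : f (u |: S) w = f S w + g w.
  rewrite /f /g -natrD !savedE; congr (_%:R).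
  by rewrite card_savedb_U1.
have mf T : measurable_fun setT (f T) := meas_f X tau T.
have mg : measurable_fun setT g.
  have -> : g = (fun w => f (u |: S) w - f S w).
    by apply/funext => w; rewrite fg addrAC subrr add0r.
  exact: measurable_funB.
have finS : (\int[P]_w (f S w)%:E)%E \is a fin_num.
  rewrite ge0_fin_numE; last by apply: integral_ge0 => w _; rewrite lee_fin.
  apply: (@le_lt_trans _ _ (\int[P]_w (#|V|%:R)%:E)%E).
    apply: ge0_le_integral => //.
    - by move=> w _; rewrite lee_fin.
    - by apply/measurable_EFinP; exact: mf.
    - by move=> w _; rewrite lee_fin ler_nat max_card.
  rewrite integral_cst // [X in (_ * X)%E](_ : _ = 1%E) ?mule1 ?ltry //; exact: probability_setT.
have HDelta : Delta = (\int[P]_w (g w)%:E)%E.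
  rewrite /Delta !rE.
  under eq_integral => w _ do rewrite fg EFinD.
  rewrite ge0_integralD //.
  - by rewrite [X in (X - _)%E]addeC addeK.
  - by move=> w _; rewrite lee_fin.
  - by apply/measurable_EFinP; exact: mf.
  - by move=> w _; rewrite lee_fin.
  - by apply/measurable_EFinP; exact: mg.
have Hae := ae_nonneg X lam hX.
have hb w (hw : forall e, 0 <= X e w) : forall x y, fconnect par x y -> tau w < Z y w -> tau w < Z x w.
  move=> x y rxy h; exact: (lt_le_trans h (Z_mono hw rxy)).
have mA (y : V) : measurable [set w | tau w < Z y w] := meas_immune X tau y.
have mIA (y : V) : measurable_fun setT (fun w => (\1_[set w | tau w < Z y w] w : R)%:E).
  by apply/measurable_EFinP; exact: measurable_indic.
have intA (y : V) : (\int[P]_w (c'%:R%:E * (\1_[set w | (tau w < Z y w)%R] w : R)%:E) =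
                     c'%:R%:E * P [set w | (tau w < Z y w)%R])%E.
  rewrite ge0_integralZl_EFin //; first by rewrite integral_indic // setIT.
have cEg w (hw : forall e, 0 <= X e w) : tau w < Z u w ->
    (forall i, i \in S -> u \in desc par i -> ~~ (tau w < Z i w)) ->
    g w = c'%:R.
  move=> hu hanc; rewrite /g hu muln1 savedE.
  by rewrite (diff_noanc tr (hb w hw) uS hu hanc).
have g0 w : ~~ (tau w < Z u w) -> g w = 0.
  by move=> /negbTE hu; rewrite /g hu muln0.
split.
- move=> hSA; rewrite HDelta cE -intA.
  apply: ae_eq_integral => //.
  + by apply/measurable_EFinP; exact: mg.
  + exact: measurable_funeM.
  + apply: filterS Hae => w hw _; rewrite indicE.
    case: (boolP (tau w < Z u w)) => hu.
      rewrite mem_set // mule1 (cEg w hw hu) //.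
      move=> i iS ui; have : i \in S :&: anc par u by rewrite inE iS; move: ui; rewrite /desc inE.
      by rewrite hSA inE.
    by rewrite memNset ?(g0 w hu) ?mule0 //; apply/negP.
- move=> v hv hdeep.
  move/finset.setIP: (hv) => [vS va].
  have vu : u \in desc par v by rewrite /desc inE.
  have ruv : fconnect par u v by move: va; rewrite /anc inE => /andP[_].
  have finPA (y : V) : P [set w | (tau w < Z y w)%R] \is a fin_num.
    by rewrite fin_num_measure.
  have key : (\int[P]_w (g w)%:E + c'%:R%:E * P [set w | (tau w < Z v w)%R] =
              c'%:R%:E * P [set w | (tau w < Z u w)%R])%E.
    rewrite -!intA -ge0_integralD //.
    + apply: ae_eq_integral => //.
      * apply: emeasurable_funD => //; [by apply/measurable_EFinP; exact: mg | exact: measurable_funeM].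
      * exact: measurable_funeM.
      * apply: filterS Hae => w hw _; rewrite !indicE -!EFinM -EFinD; congr (_%:E).
        case: (boolP (tau w < Z v w)) => hvw.
          have huw : tau w < Z u w := hb w hw u v ruv hvw.
          rewrite !mem_set // /g huw muln1 savedE (diff_anc tr vS vu hvw) cards0 add0r.
          by [].
        rewrite (memNset (A := [set w | tau w < Z v w])); last by apply/negP.
        rewrite mulr0 addr0.
        case: (boolP (tau w < Z u w)) => huw; last first.
          by rewrite memNset ?(g0 w huw) ?mulr0 //; apply/negP.
        rewrite mem_set // mulr1 (cEg w hw huw) //.
        move=> i iS ui; apply/negP => bi.
        have rui : fconnect par u i by move: ui; rewrite in_desc => /andP[_].
        case: (reach_total rui ruv) => h.
        - case: (eqVneq i v) => [eiv|niv].
            by move: bi; rewrite eiv (negbTE hvw).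
          have vi : i \in desc par v by rewrite in_desc eq_sym niv h.
          have := depth_lt tr vi.
          have : i \in S :&: anc par u by rewrite finset.in_setI iS /anc inE; move: ui; rewrite in_desc eq_sym.
          by move=> /hdeep; rewrite leqNgt => /negbTE ->.
        - by move: hvw; rewrite (hb w hw v i h bi).
    + by move=> w _; rewrite lee_fin.
    + by apply/measurable_EFinP; exact: mg.
    + exact: measurable_funeM.
  rewrite HDelta cE muleBr ?fin_num_adde_defl ?fin_numN //.
  by rewrite -key addeK // fin_numM.
- by rewrite HDelta; apply: integral_ge0 => w _; rewrite lee_fin.
Qed.
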